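(* Let $k_0\ge 0$ and $c_0\in L^1([-\tau,0);\mathbb{R}_+)$. Let $c^m\in L^1_{loc}([0,\infty);\mathbb{R}_+)$ be the unique solution of $$c^m(t)=\varepsilon\int_{t-\tau}^{t}\widetilde{c}^{\,m}(u)\,e^{\eta(u-t)}\,du,\qquad t\ge 0,$$ where $\widetilde c^{\,m}$ is the concatenation of $c_0$ and $c^m$. Then every control $c\in L^1_{loc}([0,\infty);\mathbb{R}_+)$ satisfying the habit constraint $c(t)\ge h(t)$ for almost every $t\ge0$ satisfies $c(t)\ge c^m(t)$ for almost every $t\ge 0$, and its associated capital path satisfies, for every $t\ge 0$, $$k(t)\le k^M(t):=e^{(A-\delta)t}\Big[k_0-\int_0^t c^m(u)e^{-(A-\delta)u}\,du\Big].$$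
   Context: Fixed parameters: $A>0$, $\delta>0$, $\rho>0$, $\gamma>0$ with $\gamma\ne1$, $\varepsilon>0$ (habit intensity), $\eta>0$ (habit persistence), $\tau>0$ (memory). Given an initial past consumption $c_0\in L^1([-\tau,0);\mathbb{R}_+)$ and a control $c\in L^1_{loc}([0,\infty);\mathbb{R}_+)$, the concatenation is $\widetilde c(s)=c_0(s)$ for $s\in[-\tau,0)$ and $\widetilde c(s)=c(s)$ for $s\ge0$. The (internal) habit is $h(t)=\varepsilon\int_{t-\tau}^{t}\widetilde c(u)e^{\eta(u-t)}du$ for $t\ge0$. Given $k_0$, the capital path associated to $c$ is the solution of $\dot k(t)=(A-\delta)k(t)-c(t)$, $k(0)=k_0$, i.e. $k(t)=k_0e^{(A-\delta)t}-\int_0^te^{(A-\delta)(t-u)}c(u)\,du$. *)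

(* Defs.v *)
(* Lebesgue integration is not available, so we
   use the Henstock-Kurzweil (gauge) integral, which for nonnegative functions
   coincides with the Lebesgue integral (nonnegative HK-integrable functions are
   exactly the nonnegative Lebesgue-integrable ones, with the same integral). *)
From Stdlib Require Import Reals Classical ClassicalEpsilon.
Open Scope R_scope.

(* fine_sum f g a b S : S is the Riemann sum of f over some g-fine tagged
   partition of [a,b] (built left to right). *)
Inductive fine_sum (f g : R -> R) (a : R) : R -> R -> Prop :=
| fine_nil : fine_sum f g a a 0
| fine_cons : forall m b t S,
    fine_sum f g a m S -> m < b -> m <= t -> t <= b ->
    t - g t < m -> b < t + g t ->
    fine_sum f g a b (S + f t * (b - m)).

Definition HK_integral (f : R -> R) (a b I : R) : Prop :=
  a <= b /\
  forall eps, 0 < eps ->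
    exists g : R -> R, (forall x, 0 < g x) /\
      forall S, fine_sum f g a b S -> Rabs (S - I) < eps.

(* The value of the integral (meaningful when it exists; it is unique). *)
Definition HKint (f : R -> R) (a b : R) : R :=
  epsilon (inhabits 0) (fun I => HK_integral f a b I).

Definition null_set (N : R -> Prop) : Prop :=
  forall eps, 0 < eps ->
    exists lo hi : nat -> R,
      (forall n, lo n <= hi n) /\
      (forall x, N x -> exists n, lo n < x < hi n) /\
      (forall n, sum_f_R0 (fun i => hi i - lo i) n <= eps).

Definition ae_pos (P : R -> Prop) : Prop :=
  null_set (fun t => 0 <= t /\ ~ P t).

Definition L1loc_pos (c : R -> R) : Prop :=
  (forall t, 0 <= t -> 0 <= c t) /\
  (forall T, 0 <= T -> exists I, HK_integral c 0 T I).

Definition L1_past (tau : R) (c0 : R -> R) : Prop :=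
  (forall s, -tau <= s < 0 -> 0 <= c0 s) /\
  (exists I, HK_integral c0 (-tau) 0 I).

Definition concat (c0 c : R -> R) (s : R) : R :=
  if Rlt_dec s 0 then c0 s else c s.

Definition habit (epsh eta tau : R) (c0 c : R -> R) (t : R) : R :=
  epsh * HKint (fun u => concat c0 c u * exp (eta * (u - t))) (t - tau) t.

Definition kpath (A delta k0 : R) (c : R -> R) (t : R) : R :=
  k0 * exp ((A - delta) * t)
  - HKint (fun u => exp ((A - delta) * (t - u)) * c u) 0 t.

Definition kM (A delta k0 : R) (cm : R -> R) (t : R) : R :=
  exp ((A - delta) * t) *
  (k0 - HKint (fun u => cm u * exp (- (A - delta) * u)) 0 t).

(* Main.v *)
Require Import Defs.
From Stdlib Require Import Reals Lra Lia List Classical ClassicalEpsilon.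
Open Scope R_scope.

Inductive pt (g : R -> R) (a : R) : R -> list (R*R*R) -> Prop :=
| pt_nil : pt g a a nil
| pt_cons : forall m b t l, pt g a m l -> m < b -> m <= t -> t <= b ->
    t - g t < m -> b < t + g t -> pt g a b ((m,t,b)::l).

Fixpoint RS (f : R -> R) (l : list (R*R*R)) : R :=
  match l with nil => 0 | (m,t,b)::l' => RS f l' + f t * (b - m) end.

Lemma fine_pt f g a b S : fine_sum f g a b S -> exists l, pt g a b l /\ S = RS f l.
Proof.
  induction 1. exists nil; split; [constructor|reflexivity].
  destruct IHfine_sum as [l [Hl ->]]. exists ((m,t,b)::l).
  split; [econstructor; eauto| reflexivity].
Qed.

Lemma pt_fine f g a b l : pt g a b l -> fine_sum f g a b (RS f l).
Proof. induction 1; simpl. constructor. constructor; auto. Qed.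

Definition Int f a b I := a <= b /\ forall eps, 0 < eps ->
  exists g, (forall x, 0 < g x) /\ forall l, pt g a b l -> Rabs (RS f l - I) < eps.

Lemma Int_HK f a b I : Int f a b I <-> HK_integral f a b I.
Proof.
  split; intros [Hab H]; split; auto; intros eps Heps;
  destruct (H eps Heps) as [g [Hg H2]]; exists g; split; auto.
  - intros S HS. destruct (fine_pt _ _ _ _ _ HS) as [l [Hl ->]]. auto.
  - intros l Hl. apply H2. apply pt_fine; auto.
Qed.

Lemma pt_le g a b l : pt g a b l -> a <= b.
Proof. induction 1; lra. Qed.

Lemma pt_tags g a b l : pt g a b l -> forall m t b', In (m,t,b') l ->
  a <= m /\ m <= t /\ t <= b' /\ b' <= b.
Proof.
  induction 1; simpl; intros m' t' b' Hin. contradiction.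
  destruct Hin as [E|Hin]. inversion E; subst. pose proof (pt_le _ _ _ _ H). lra.
  destruct (IHpt _ _ _ Hin). lra.
Qed.

Lemma pt_mono g g' a b l : (forall x, g x <= g' x) -> pt g a b l -> pt g' a b l.
Proof.
  intros Hg. induction 1. constructor.
  econstructor; eauto. specialize (Hg t); lra. specialize (Hg t); lra.
Qed.

Lemma pt_app g a m b l1 l2 : pt g a m l1 -> pt g m b l2 -> pt g a b (l2 ++ l1).
Proof. intros H1. induction 1; simpl; auto. econstructor; eauto. Qed.

Lemma RS_app f l1 l2 : RS f (l2 ++ l1) = RS f l2 + RS f l1.
Proof. induction l2 as [|[[m t] b] l IH]; simpl; [lra|rewrite IH; lra]. Qed.

Lemma cousin g a b : (forall x, 0 < g x) -> a <= b -> exists l, pt g a b l.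
Proof.
  intros Hg Hab.
  set (E := fun x => a <= x <= b /\ exists l, pt g a x l).
  assert (HB : bound E). { exists b. intros x [Hx _]. lra. }
  assert (HE : exists x, E x). { exists a. split. lra. exists nil. constructor. }
  destruct (completeness E HB HE) as [s [Hub Hlub]].
  assert (Has : a <= s). { apply Hub. split. lra. exists nil. constructor. }
  assert (Hsb : s <= b). { apply Hlub. intros x [Hx _]; lra. }
  assert (Es : E s).
  { destruct (classic (exists x, E x /\ s - g s < x)) as [[x [[Hx [l Hl]] Hx2]]|Hn].
    - assert (x <= s) by (apply Hub; split; [lra| exists l; auto]).
      destruct (Req_dec x s) as [->|Hne]. split; [lra|exists l; auto].
      split. lra. exists ((x,s,s)::l). specialize (Hg s). econstructor; eauto; lra.
    - exfalso. assert (s <= s - g s). { apply Hlub. intros x Ex.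
      destruct (Rle_dec x (s - g s)); auto. exfalso; apply Hn; exists x; split; auto; lra. }
      specialize (Hg s); lra. }
  destruct (Req_dec s b) as [<-|Hne]. destruct Es as [_ H]; exact H.
  exfalso. destruct Es as [_ [l Hl]].
  set (y := Rmin b (s + g s / 2)).
  assert (Hy1 : s < y). { unfold y. specialize (Hg s). apply Rmin_glb_lt; lra. }
  assert (Hy2 : y <= b) by apply Rmin_l.
  assert (Hy3 : y <= s + g s / 2) by apply Rmin_r.
  assert (E y). { split. lra. exists ((s,s,y)::l). specialize (Hg s).
    econstructor; eauto; lra. }
  pose proof (Hub y H). lra.
Qed.

Definition gmin (g1 g2 : R -> R) x := Rmin (g1 x) (g2 x).
Lemma gmin_pos g1 g2 : (forall x, 0 < g1 x) -> (forall x, 0 < g2 x) -> forall x, 0 < gmin g1 g2 x.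
Proof. intros H1 H2 x. unfold gmin. apply Rmin_glb_lt; auto. Qed.
Lemma gmin_l g1 g2 x : gmin g1 g2 x <= g1 x. Proof. apply Rmin_l. Qed.
Lemma gmin_r g1 g2 x : gmin g1 g2 x <= g2 x. Proof. apply Rmin_r. Qed.

Lemma Int_unique f a b I J : Int f a b I -> Int f a b J -> I = J.
Proof.
  intros [Hab H1] [_ H2].
  destruct (Req_dec I J) as [|Hne]; auto. exfalso.
  assert (Hlt : 0 < Rabs (I - J)) by (apply Rabs_pos_lt; lra).
  set (e := Rabs (I - J) / 2).
  assert (He : 0 < e) by (unfold e; lra).
  destruct (H1 e He) as [g1 [Hg1 K1]]. destruct (H2 e He) as [g2 [Hg2 K2]].
  destruct (cousin (gmin g1 g2) a b (gmin_pos _ _ Hg1 Hg2) Hab) as [l Hl].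
  pose proof (K1 l (pt_mono _ _ _ _ _ (gmin_l g1 g2) Hl)).
  pose proof (K2 l (pt_mono _ _ _ _ _ (gmin_r g1 g2) Hl)).
  assert (Rabs (I - J) <= Rabs (RS f l - I) + Rabs (RS f l - J)).
  { replace (I - J) with (-(RS f l - I) + (RS f l - J)) by ring.
    eapply Rle_trans. apply Rabs_triang. rewrite Rabs_Ropp. lra. }
  unfold e in *. lra.
Qed.

Lemma HKint_eq f a b I : Int f a b I -> HKint f a b = I.
Proof.
  intros H. unfold HKint.
  assert (Hex : exists I, HK_integral f a b I) by (exists I; apply Int_HK; auto).
  pose proof (epsilon_spec (inhabits 0) _ Hex) as Hs.
  apply Int_HK in Hs. eapply Int_unique; eauto.
Qed.

Lemma RS_plus f h l : RS (fun x => f x + h x) l = RS f l + RS h l.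
Proof. induction l as [|[[m t] b] l IH]; simpl; [lra|rewrite IH; ring]. Qed.
Lemma RS_scal k f l : RS (fun x => k * f x) l = k * RS f l.
Proof. induction l as [|[[m t] b] l IH]; simpl; [lra|rewrite IH; ring]. Qed.
Lemma RS_minus f h l : RS (fun x => f x - h x) l = RS f l - RS h l.
Proof. induction l as [|[[m t] b] l IH]; simpl; [lra|rewrite IH; ring]. Qed.

Lemma RS_ext_pt g a b l f h : pt g a b l -> (forall x, a <= x <= b -> f x = h x) -> RS f l = RS h l.
Proof.
  intros Hl Hfh. induction Hl; simpl. auto.
  pose proof (pt_le _ _ _ _ Hl).
  rewrite IHHl; [|intros; apply Hfh; lra]. rewrite (Hfh t); [auto|lra].
Qed.

Lemma RS_le_pt g a b l f h : pt g a b l -> (forall x, a <= x <= b -> f x <= h x) -> RS f l <= RS h l.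
Proof.
  intros Hl Hfh. induction Hl; simpl. lra.
  pose proof (pt_le _ _ _ _ Hl).
  assert (RS f l <= RS h l) by (apply IHHl; intros; apply Hfh; lra).
  assert (f t * (b - m) <= h t * (b - m)) by (apply Rmult_le_compat_r; [lra| apply Hfh; lra]).
  lra.
Qed.

Lemma Int_le_ab f a b I : Int f a b I -> a <= b.
Proof. intros [H _]; auto. Qed.

Lemma Int_plus f h a b I J : Int f a b I -> Int h a b J -> Int (fun x => f x + h x) a b (I + J).
Proof.
  intros [Hab H1] [_ H2]. split; auto. intros eps Heps.
  destruct (H1 (eps/2)) as [g1 [Hg1 K1]]; [lra|]. destruct (H2 (eps/2)) as [g2 [Hg2 K2]]; [lra|].
  exists (gmin g1 g2). split. apply gmin_pos; auto.
  intros l Hl. rewrite RS_plus.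
  pose proof (K1 l (pt_mono _ _ _ _ _ (gmin_l g1 g2) Hl)).
  pose proof (K2 l (pt_mono _ _ _ _ _ (gmin_r g1 g2) Hl)).
  replace (RS f l + RS h l - (I + J)) with ((RS f l - I) + (RS h l - J)) by ring.
  eapply Rle_lt_trans. apply Rabs_triang. lra.
Qed.

Lemma Int_scal k f a b I : Int f a b I -> Int (fun x => k * f x) a b (k * I).
Proof.
  intros [Hab H1]. split; auto. intros eps Heps.
  destruct (H1 (eps / (Rabs k + 1))) as [g1 [Hg1 K1]].
  { apply Rdiv_lt_0_compat; auto. pose proof (Rabs_pos k); lra. }
  exists g1. split; auto. intros l Hl. rewrite RS_scal.
  replace (k * RS f l - k * I) with (k * (RS f l - I)) by ring.
  rewrite Rabs_mult. pose proof (K1 l Hl). pose proof (Rabs_pos k).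
  pose proof (Rabs_pos (RS f l - I)).
  apply Rle_lt_trans with ((Rabs k + 1) * Rabs (RS f l - I)). nra.
  apply Rlt_le_trans with ((Rabs k + 1) * (eps / (Rabs k + 1))).
  apply Rmult_lt_compat_l; lra. right; field; lra.
Qed.

Lemma Int_ext f h a b I : Int f a b I -> (forall x, a <= x <= b -> f x = h x) -> Int h a b I.
Proof.
  intros [Hab H1] He. split; auto. intros eps Heps.
  destruct (H1 eps Heps) as [g [Hg K]]. exists g; split; auto.
  intros l Hl. rewrite <- (RS_ext_pt _ _ _ _ _ _ Hl He). auto.
Qed.

Lemma Int_minus f h a b I J : Int f a b I -> Int h a b J -> Int (fun x => f x - h x) a b (I - J).
Proof.
  intros H1 H2. pose proof (Int_plus _ _ _ _ _ _ H1 (Int_scal (-1) _ _ _ _ H2)) as H.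
  replace (I - J) with (I + -1 * J) by ring.
  eapply Int_ext; eauto. intros; simpl; ring.
Qed.

Lemma Int_le f h a b I J : Int f a b I -> Int h a b J -> (forall x, a <= x <= b -> f x <= h x) -> I <= J.
Proof.
  intros [Hab H1] [_ H2] Hfh. apply Rnot_lt_le. intro Hlt.
  set (e := (I - J) / 2).
  destruct (H1 e) as [g1 [Hg1 K1]]; [unfold e; lra|]. destruct (H2 e) as [g2 [Hg2 K2]]; [unfold e; lra|].
  destruct (cousin (gmin g1 g2) a b (gmin_pos _ _ Hg1 Hg2) Hab) as [l Hl].
  pose proof (K1 l (pt_mono _ _ _ _ _ (gmin_l g1 g2) Hl)).
  pose proof (K2 l (pt_mono _ _ _ _ _ (gmin_r g1 g2) Hl)).
  pose proof (RS_le_pt _ _ _ _ _ _ Hl Hfh).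
  apply Rabs_def2 in H. apply Rabs_def2 in H0. unfold e in *. lra.
Qed.

Lemma pt_aa g a l : pt g a a l -> l = nil.
Proof. intros H. inversion H; subst; auto. pose proof (pt_le _ _ _ _ H0). lra. Qed.

Lemma Int_zero f a : Int f a a 0.
Proof.
  split. lra. intros eps Heps. exists (fun _ => 1). split. intros; lra.
  intros l Hl. rewrite (pt_aa _ _ _ Hl). simpl. rewrite Rminus_0_r, Rabs_R0. auto.
Qed.

Lemma Int_const k a b : a <= b -> Int (fun _ => k) a b (k * (b - a)).
Proof.
  intros Hab. split; auto. intros eps Heps. exists (fun _ => 1). split. intros; lra.
  intros l Hl. assert (E : RS (fun _ => k) l = k * (b - a)).
  { clear Hab. induction Hl; simpl. ring. rewrite IHHl. ring. }
  rewrite E, Rminus_diag, Rabs_R0; auto.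
Qed.

Fixpoint Gm (G : nat -> R -> R) (n : nat) (x : R) : R :=
  match n with O => G O x | S k => Rmin (Gm G k x) (G (S k) x) end.

Lemma Gm_pos G : (forall n x, 0 < G n x) -> forall n x, 0 < Gm G n x.
Proof. intros H n x. induction n; simpl; auto. apply Rmin_glb_lt; auto. Qed.
Lemma Gm_le G n x : Gm G n x <= G n x.
Proof. destruct n; simpl. lra. apply Rmin_r. Qed.
Lemma Gm_mono G n m x : (n <= m)%nat -> Gm G m x <= Gm G n x.
Proof.
  induction 1. lra. simpl. eapply Rle_trans. apply Rmin_l. auto.
Qed.

Lemma cauchy_int f a b : a <= b ->
  (forall eps, 0 < eps -> exists g, (forall x, 0 < g x) /\
     forall l1 l2, pt g a b l1 -> pt g a b l2 -> Rabs (RS f l1 - RS f l2) < eps) ->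
  exists I, Int f a b I.
Proof.
  intros Hab H.
  set (P := fun n (g : R -> R) => (forall x, 0 < g x) /\
     forall l1 l2, pt g a b l1 -> pt g a b l2 -> Rabs (RS f l1 - RS f l2) < / INR (S n)).
  set (G := fun n => epsilon (inhabits (fun _ : R => 1)) (P n)).
  assert (HG : forall n, P n (G n)).
  { intro n. apply epsilon_spec. apply H. apply Rinv_0_lt_compat, lt_0_INR; lia. }
  assert (HGp : forall n x, 0 < G n x) by (intros n x; apply (HG n)).
  set (L := fun n => epsilon (inhabits nil) (fun l => pt (Gm G n) a b l)).
  assert (HL : forall n, pt (Gm G n) a b (L n)).
  { intro n. apply epsilon_spec. apply cousin; auto. apply Gm_pos; auto. }
  assert (Hclose : forall N n l, (N <= n)%nat -> pt (Gm G N) a b l ->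
     Rabs (RS f l - RS f (L n)) < / INR (S N)).
  { intros N n l HNn Hl. apply (HG N).
    apply (pt_mono (Gm G N)); auto. intro; apply Gm_le.
    apply (pt_mono (Gm G n)); auto. intro; eapply Rle_trans; [apply Gm_mono; eauto | apply Gm_le]. }
  set (u := fun n => RS f (L n)).
  assert (Hc : Cauchy_crit u).
  { intros eps Heps. destruct (archimed_cor1 eps Heps) as [N [HN HN0]].
    exists N. intros n m Hn Hm. unfold Rdist, u.
    apply Rlt_trans with (/ INR (S N)).
    apply Hclose; auto. apply (pt_mono (Gm G n)); auto. intro; apply Gm_mono; auto.
    apply Rlt_trans with (/ INR N); auto. apply Rinv_lt_contravar.
    apply Rmult_lt_0_compat; apply lt_0_INR; lia. apply lt_INR; lia. }
  destruct (R_complete u Hc) as [I HI]. exists I. split; auto.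
  intros eps Heps. destruct (archimed_cor1 (eps/2)) as [N [HN HN0]]; [lra|].
  exists (Gm G N). split. apply Gm_pos; auto.
  intros l Hl. destruct (HI (eps/2)) as [M HM]; [lra|].
  specialize (HM (max N M) (Nat.le_max_r _ _)). unfold Rdist, u in HM.
  pose proof (Hclose N (max N M) l (Nat.le_max_l _ _) Hl).
  assert (/ INR (S N) < / INR N).
  { apply Rinv_lt_contravar. apply Rmult_lt_0_compat; apply lt_0_INR; lia. apply lt_INR; lia. }
  replace (RS f l - I) with ((RS f l - RS f (L (max N M))) + (RS f (L (max N M)) - I)) by ring.
  eapply Rle_lt_trans. apply Rabs_triang. lra.
Qed.

Lemma Int_sub f a b c d I : Int f a b I -> a <= c -> c <= d -> d <= b -> exists J, Int f c d J.
Proof.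
  intros [Hab H] Hac Hcd Hdb. apply cauchy_int; auto.
  intros eps Heps. destruct (H (eps/2)) as [g [Hg K]]; [lra|].
  exists g. split; auto.
  destruct (cousin g a c Hg Hac) as [lL HlL]. destruct (cousin g d b Hg Hdb) as [lR HlR].
  intros l1 l2 H1 H2.
  pose proof (K _ (pt_app _ _ _ _ _ _ (pt_app _ _ _ _ _ _ HlL H1) HlR)) as E1.
  pose proof (K _ (pt_app _ _ _ _ _ _ (pt_app _ _ _ _ _ _ HlL H2) HlR)) as E2.
  rewrite !RS_app in E1, E2.
  apply Rabs_def2 in E1. apply Rabs_def2 in E2. apply Rabs_def1; lra.
Qed.

Section Add.
Variables (g1 g2 : R -> R) (b : R).
Hypotheses (Hg1 : forall x, 0 < g1 x) (Hg2 : forall x, 0 < g2 x).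
Definition Gs x := if Rlt_dec x b then Rmin (g1 x) (b - x)
  else if Rlt_dec b x then Rmin (g2 x) (x - b) else Rmin (g1 x) (g2 x).
Lemma Gs_pos x : 0 < Gs x.
Proof. unfold Gs. destruct (Rlt_dec x b); [|destruct (Rlt_dec b x)]; apply Rmin_glb_lt; auto; lra. Qed.
Lemma Gs_le1 t : t <= b -> Gs t <= g1 t.
Proof. intros. unfold Gs. destruct (Rlt_dec t b); [apply Rmin_l|destruct (Rlt_dec b t)]. lra. apply Rmin_l. Qed.
Lemma Gs_le2 t : b <= t -> Gs t <= g2 t.
Proof. intros. unfold Gs. destruct (Rlt_dec t b). lra. destruct (Rlt_dec b t). apply Rmin_l. apply Rmin_r. Qed.
Lemma Gs_lt t : t < b -> Gs t <= b - t.
Proof. intros. unfold Gs. destruct (Rlt_dec t b). apply Rmin_r. lra. Qed.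
Lemma Gs_gt t : b < t -> Gs t <= t - b.
Proof. intros. unfold Gs. destruct (Rlt_dec t b). lra. destruct (Rlt_dec b t). apply Rmin_r. lra. Qed.

Lemma split_pt a x l : a <= b -> pt Gs a x l ->
  (x <= b -> pt g1 a x l) /\
  (b < x -> exists l1 l2, pt g1 a b l1 /\ pt g2 b x l2 /\ forall f, RS f l = RS f l1 + RS f l2).
Proof.
  intros Hab. induction 1 as [|m x t l Hl IH Hmx Hmt Htx H1 H2].
  - split; intros. constructor. lra.
  - destruct IH as [IH1 IH2]. split.
    + intros Hxb. pose proof (Gs_le1 t ltac:(lra)). econstructor; try lra. apply IH1; lra.
    + intros Hbx. destruct (Rlt_le_dec b m) as [Hbm|Hmb].
      * destruct (IH2 Hbm) as [l1 [l2 [K1 [K2 K3]]]]. exists l1, ((m,t,x)::l2).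
        split; auto. pose proof (Gs_le2 t ltac:(lra)). split. econstructor; eauto; lra.
        intros f; simpl; rewrite K3; ring.
      * destruct (Req_dec m b) as [Emb|Nmb].
        -- subst m. exists l, ((b,t,x)::nil). split. apply IH1; lra.
           pose proof (Gs_le2 t ltac:(lra)). split. econstructor; eauto; try lra. constructor.
           intros f; simpl; ring.
        -- assert (Htb : t = b).
           { destruct (Rlt_le_dec t b) as [Htb|Hbt]. pose proof (Gs_lt t Htb); lra.
             destruct (Req_dec t b); auto. pose proof (Gs_gt t ltac:(lra)); lra. }
           subst t. pose proof (Gs_le1 b ltac:(lra)). pose proof (Gs_le2 b ltac:(lra)).
           exists ((m,b,b)::l), ((b,b,x)::nil). split. econstructor; try lra. apply IH1; lra.
           split. econstructor; eauto; try lra. constructor.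
           intros f; simpl; ring.
Qed.
End Add.

Lemma Int_add f a b c I J : Int f a b I -> Int f b c J -> Int f a c (I + J).
Proof.
  intros [Hab H1] [Hbc H2]. split. lra. intros eps Heps.
  destruct (H1 (eps/2)) as [g1 [Hg1 K1]]; [lra|]. destruct (H2 (eps/2)) as [g2 [Hg2 K2]]; [lra|].
  exists (Gs g1 g2 b). split. apply Gs_pos; auto.
  intros l Hl. destruct (split_pt g1 g2 b a c l Hab Hl) as [S1 S2].
  destruct (Req_dec b c) as [Ebc|Nbc].
  - subst c. assert (J = 0).
    { apply (Int_unique f b b). split; [lra|exact H2]. apply Int_zero. }
    subst J. rewrite Rplus_0_r. pose proof (K1 l (S1 ltac:(lra))). lra.
  - destruct (S2 ltac:(lra)) as [l1 [l2 [E1 [E2 E3]]]]. rewrite E3.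
    pose proof (K1 _ E1). pose proof (K2 _ E2).
    replace (RS f l1 + RS f l2 - (I + J)) with ((RS f l1 - I) + (RS f l2 - J)) by ring.
    eapply Rle_lt_trans. apply Rabs_triang. lra.
Qed.

Lemma Int_nonneg f a b I : Int f a b I -> (forall x, a <= x <= b -> 0 <= f x) -> 0 <= I.
Proof.
  intros H Hf. pose proof (Int_const 0 a b (Int_le_ab _ _ _ _ H)).
  replace 0 with (0 * (b - a)) by ring. eapply Int_le; eauto.
Qed.

Lemma Int_sub_le f a b c d I J : Int f a b I -> Int f c d J -> a <= c -> d <= b ->
  (forall x, a <= x <= b -> 0 <= f x) -> J <= I.
Proof.
  intros HI HJ Hac Hdb Hf. pose proof (Int_le_ab _ _ _ _ HJ) as Hcd.
  assert (Hcb : c <= b) by lra. assert (Had : a <= d) by lra.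
  destruct (Int_sub _ _ _ a c _ HI (Rle_refl a) Hac Hcb) as [J1 H1].
  destruct (Int_sub _ _ _ d b _ HI Had Hdb (Rle_refl b)) as [J3 H3].
  pose proof (Int_add _ _ _ _ _ _ (Int_add _ _ _ _ _ _ H1 HJ) H3) as Hall.
  rewrite (Int_unique _ _ _ _ _ HI Hall).
  pose proof (Int_nonneg _ _ _ _ H1 ltac:(intros; apply Hf; lra)).
  pose proof (Int_nonneg _ _ _ _ H3 ltac:(intros; apply Hf; lra)). lra.
Qed.

Definition WN (N : R -> Prop) (w : R -> R) t :=
  if excluded_middle_informative (N t) then Rabs (w t) else 0.

Lemma sum_nonneg f M : (forall i, (i <= M)%nat -> 0 <= f i) -> 0 <= sum_f_R0 f M.
Proof.
  induction M; simpl; intros H. apply H; lia.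
  pose proof (H (S M) (le_n _)). assert (0 <= sum_f_R0 f M) by (apply IHM; intros; apply H; lia). lra.
Qed.

Lemma sum_ge_term f M i : (forall j, (j <= M)%nat -> 0 <= f j) -> (i <= M)%nat -> f i <= sum_f_R0 f M.
Proof.
  induction M; simpl; intros H Hi.
  - replace i with 0%nat by lia. lra.
  - destruct (Nat.eq_dec i (S M)) as [->|Hne].
    + assert (0 <= sum_f_R0 f M) by (apply sum_nonneg; intros; apply H; lia). lra.
    + pose proof (H (S M) (le_n _)). assert (f i <= sum_f_R0 f M) by (apply IHM; [intros; apply H; lia| lia]). lra.
Qed.

Lemma sum_add f g h M : (forall i, f i + g i = h i) -> sum_f_R0 f M + sum_f_R0 g M = sum_f_R0 h M.
Proof. intros H. induction M; simpl. apply H. rewrite <- H, <- IHM. ring. Qed.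

Lemma sum_le f g M : (forall i, (i <= M)%nat -> f i <= g i) -> sum_f_R0 f M <= sum_f_R0 g M.
Proof.
  induction M; simpl; intros H. apply H; lia.
  pose proof (H (S M) (le_n _)). assert (sum_f_R0 f M <= sum_f_R0 g M) by (apply IHM; intros; apply H; lia). lra.
Qed.

Lemma geom_sum eps M : sum_f_R0 (fun k => eps / 2 ^ (S k)) M = eps * (1 - / 2 ^ (S M)).
Proof.
  induction M. simpl; field.
  replace (sum_f_R0 _ (S M)) with (sum_f_R0 (fun k => eps/2^S k) M + eps/2^(S (S M))) by reflexivity.
  rewrite IHM. assert (2 ^ M <> 0) by (apply pow_nonzero; lra). simpl. field. auto.
Qed.

Definition CovP (N : R -> Prop) e (p : (nat -> R) * (nat -> R)) :=
  (forall n, fst p n <= snd p n) /\ (forall x, N x -> exists n, fst p n < x < snd p n) /\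
  (forall n, sum_f_R0 (fun i => snd p i - fst p i) n <= e).

Definition len lo hi y := Rmax 0 (Rmin y hi - lo).
Lemma len_mono lo hi y z : y <= z -> len lo hi y <= len lo hi z.
Proof.
  intros. unfold len. apply Rle_max_compat_l.
  assert (Rmin y hi <= Rmin z hi). { unfold Rmin. destruct (Rle_dec y hi), (Rle_dec z hi); lra. } lra.
Qed.
Lemma len_range lo hi y z : lo <= hi -> len lo hi z - len lo hi y <= hi - lo.
Proof.
  intros. unfold len.
  assert (0 <= Rmax 0 (Rmin y hi - lo)) by apply Rmax_l.
  assert (Rmax 0 (Rmin z hi - lo) <= hi - lo).
  { apply Rmax_lub. lra. pose proof (Rmin_r z hi). lra. } lra.
Qed.
Lemma len_in lo hi y z : lo < y -> y <= z -> z < hi -> len lo hi z - len lo hi y = z - y.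
Proof.
  intros. unfold len. rewrite (Rmin_left z hi), (Rmin_left y hi) by lra.
  rewrite (Rmax_right 0 (z - lo)), (Rmax_right 0 (y - lo)) by lra. ring.
Qed.

Section NullG.
Variables (N : R -> Prop) (w : R -> R) (eps : R).
Hypotheses (HN : null_set N) (Heps : 0 < eps).

Definition ek k := eps / (INR k + 1) / 2 ^ (S k).
Lemma ek_pos k : 0 < ek k.
Proof. unfold ek. apply Rdiv_lt_0_compat. apply Rdiv_lt_0_compat; auto. pose proof (pos_INR k); lra.
  apply pow_lt; lra. Qed.

Definition Cv k := epsilon (inhabits ((fun _ : nat => 0), (fun _ : nat => 0))) (CovP N (ek k)).
Lemma Cv_spec k : CovP N (ek k) (Cv k).
Proof.
  unfold Cv. apply epsilon_spec. destruct (HN (ek k) (ek_pos k)) as [lo [hi H]]. exists (lo, hi). exact H.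
Qed.
Definition lo k n := fst (Cv k) n.
Definition hi k n := snd (Cv k) n.

Definition kx x := epsilon (inhabits 0%nat) (fun k => Rabs (w x) <= INR k).
Lemma kx_spec x : Rabs (w x) <= INR (kx x).
Proof.
  apply (epsilon_spec (inhabits 0%nat) (fun k => Rabs (w x) <= INR k)).
  destruct (INR_archimed 1 (Rabs (w x))) as [n Hn]. lra. exists n. lra.
Qed.
Definition nx x := epsilon (inhabits 0%nat) (fun n => lo (kx x) n < x < hi (kx x) n).
Lemma nx_spec x : N x -> lo (kx x) (nx x) < x < hi (kx x) (nx x).
Proof.
  intros Hx. apply (epsilon_spec (inhabits 0%nat) (fun n => lo (kx x) n < x < hi (kx x) n)).
  destruct (Cv_spec (kx x)) as [_ [H _]]. apply H; auto.
Qed.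

Definition gN x := if excluded_middle_informative (N x)
  then Rmin (x - lo (kx x) (nx x)) (hi (kx x) (nx x) - x) else 1.
Lemma gN_pos x : 0 < gN x.
Proof.
  unfold gN. destruct (excluded_middle_informative (N x)) as [Hx|]; [|lra].
  pose proof (nx_spec x Hx). apply Rmin_glb_lt; lra.
Qed.

Definition Phi M y z := sum_f_R0 (fun k => INR k * sum_f_R0 (fun n => len (lo k n) (hi k n) z - len (lo k n) (hi k n) y) M) M.

Lemma Phi_add M y z u : Phi M y z + Phi M z u = Phi M y u.
Proof.
  unfold Phi. apply sum_add. intros k. rewrite <- Rmult_plus_distr_l. f_equal.
  apply sum_add. intros; ring.
Qed.

Lemma Phi_ge M y z k n : y <= z -> (k <= M)%nat -> (n <= M)%nat ->
  INR k * (len (lo k n) (hi k n) z - len (lo k n) (hi k n) y) <= Phi M y z.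
Proof.
  intros Hyz Hk Hn. unfold Phi.
  assert (Hd : forall k n, 0 <= len (lo k n) (hi k n) z - len (lo k n) (hi k n) y).
  { intros. pose proof (len_mono (lo k0 n0) (hi k0 n0) y z Hyz). lra. }
  eapply Rle_trans; [|apply (sum_ge_term (fun k => INR k * sum_f_R0 (fun n => len (lo k n) (hi k n) z - len (lo k n) (hi k n) y) M) M k); auto].
  - apply Rmult_le_compat_l. apply pos_INR.
    apply (sum_ge_term (fun n => len (lo k n) (hi k n) z - len (lo k n) (hi k n) y) M n); auto.
  - intros. apply Rmult_le_pos. apply pos_INR. apply sum_nonneg; auto.
Qed.

Lemma Phi_nonneg M y z : y <= z -> 0 <= Phi M y z.
Proof.
  intros. pose proof (Phi_ge M y z 0 0 H (Nat.le_0_l _) (Nat.le_0_l _)). simpl in H0. lra.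
Qed.

Lemma Phi_le M y z : Phi M y z <= eps.
Proof.
  unfold Phi. eapply Rle_trans with (sum_f_R0 (fun k => eps / 2 ^ S k) M).
  - apply sum_le. intros k _.
    destruct (Cv_spec k) as [Hlh [_ Hs]].
    assert (sum_f_R0 (fun n => len (lo k n) (hi k n) z - len (lo k n) (hi k n) y) M <= ek k).
    { eapply Rle_trans; [|apply (Hs M)]. apply sum_le. intros n _. apply len_range. apply Hlh. }
    apply Rle_trans with (INR k * ek k). apply Rmult_le_compat_l; auto. apply pos_INR.
    unfold ek. pose proof (pos_INR k). assert (0 < 2 ^ S k) by (apply pow_lt; lra).
    apply Rle_trans with ((INR k / (INR k + 1)) * (eps / 2 ^ S k)). right. field. lra.
    rewrite <- (Rmult_1_l (eps / 2 ^ S k)) at 2. apply Rmult_le_compat_r.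
    apply Rlt_le, Rdiv_lt_0_compat; auto.
    apply Rmult_le_reg_r with (INR k + 1). lra. unfold Rdiv. rewrite Rmult_assoc, Rinv_l; lra.
  - rewrite geom_sum. assert (0 < / 2 ^ S M) by (apply Rinv_0_lt_compat, pow_lt; lra). nra.
Qed.

Lemma bound_exists (l : list (R*R*R)) : exists M, forall m t x, In (m,t,x) l -> N t -> (kx t <= M /\ nx t <= M)%nat.
Proof.
  induction l as [|[[m t] x] l [M HM]]. exists 0%nat. intros. destruct H.
  exists (max M (max (kx t) (nx t))). intros m' t' x' Hin Ht. destruct Hin as [E|Hin].
  inversion E; subst. lia. destruct (HM _ _ _ Hin Ht). lia.
Qed.

Lemma RS_WN_le a x l M : pt gN a x l -> (forall m t y, In (m,t,y) l -> N t -> (kx t <= M /\ nx t <= M)%nat) ->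
  RS (WN N w) l <= Phi M a x.
Proof.
  induction 1 as [|m x t l Hl IH Hmx Hmt Htx H1 H2]; intros HM; simpl.
  - apply Phi_nonneg. lra.
  - assert (IH' : RS (WN N w) l <= Phi M a m) by (apply IH; intros; eapply HM; [right; eauto|auto]).
    rewrite <- (Phi_add M a m x).
    assert (WN N w t * (x - m) <= Phi M m x); [|lra].
    unfold WN. destruct (excluded_middle_informative (N t)) as [Ht|Ht].
    + destruct (HM m t x (or_introl eq_refl) Ht) as [Hk Hn].
      pose proof (kx_spec t). pose proof (nx_spec t Ht).
      assert (gN t <= t - lo (kx t) (nx t) /\ gN t <= hi (kx t) (nx t) - t).
      { unfold gN. destruct (excluded_middle_informative (N t)); [|contradiction].
        split; [apply Rmin_l|apply Rmin_r]. }
      rewrite <- (len_in (lo (kx t) (nx t)) (hi (kx t) (nx t)) m x) by lra.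
      eapply Rle_trans; [|apply (Phi_ge M m x (kx t) (nx t)); auto; lra].
      rewrite (len_in (lo (kx t) (nx t)) (hi (kx t) (nx t)) m x) by lra.
      apply Rmult_le_compat_r; lra.
    + rewrite Rmult_0_l. apply Phi_nonneg; lra.
Qed.

Lemma null_gauge_lemma : exists g, (forall x, 0 < g x) /\
  forall a b l, pt g a b l -> RS (WN N w) l <= eps.
Proof.
  exists gN. split. apply gN_pos. intros a b l Hl.
  destruct (bound_exists l) as [M HM]. eapply Rle_trans. apply (RS_WN_le a b l M Hl HM).
  apply Phi_le.
Qed.
End NullG.

Lemma null_gauge N w eps : null_set N -> 0 < eps -> exists g, (forall x, 0 < g x) /\
  forall a b l, pt g a b l -> RS (WN N w) l <= eps.
Proof. intros. apply null_gauge_lemma; auto. Qed.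

Lemma null_sub (N N' : R -> Prop) : (forall x, N' x -> N x) -> null_set N -> null_set N'.
Proof.
  intros H HN eps Heps. destruct (HN eps Heps) as [lo [hi [H1 [H2 H3]]]].
  exists lo, hi. split; [exact H1|split; [|exact H3]]. intros x Hx. apply H2, H, Hx.
Qed.

Lemma sum_ext f g n : (forall i, f i = g i) -> sum_f_R0 f n = sum_f_R0 g n.
Proof. intros H. induction n; simpl; rewrite ?IHn, ?H; auto. Qed.

Lemma null_point p : null_set (fun x => x = p).
Proof.
  intros eps Heps. exists (fun n => match n with O => p - eps/2 | _ => 0 end).
  exists (fun n => match n with O => p + eps/2 | _ => 0 end).
  split. intros [|n]; lra. split. intros x ->. exists O. lra.
  intros n. induction n; simpl. lra. lra.
Qed.

Lemma sum_mono_idx f n m : (forall i, 0 <= f i) -> (n <= m)%nat -> sum_f_R0 f n <= sum_f_R0 f m.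
Proof.
  intros Hf. induction 1. lra. simpl. pose proof (Hf (S m)). lra.
Qed.

Lemma sum_interleave F1 F2 n :
  sum_f_R0 (fun i => if Nat.even i then F1 (Nat.div2 i) else F2 (Nat.div2 i)) (2*n+1)
  = sum_f_R0 F1 n + sum_f_R0 F2 n.
Proof.
  induction n. simpl. ring.
  replace (2 * S n + 1)%nat with (S (S (2*n+1))) by lia.
  change (sum_f_R0 ?f (S (S ?k))) with (sum_f_R0 f k + f (S k) + f (S (S k))).
  rewrite IHn. replace (S (2*n+1)) with (2 * S n)%nat by lia.
  replace (S (2 * S n)) with (2 * S n + 1)%nat by lia.
  rewrite Nat.even_even, Nat.div2_double, Nat.even_odd, Nat.div2_odd'. simpl. ring.
Qed.

Lemma null_union N1 N2 : null_set N1 -> null_set N2 -> null_set (fun x => N1 x \/ N2 x).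
Proof.
  intros H1 H2 eps Heps.
  destruct (H1 (eps/2)) as [lo1 [hi1 [A1 [B1 C1]]]]; [lra|].
  destruct (H2 (eps/2)) as [lo2 [hi2 [A2 [B2 C2]]]]; [lra|].
  exists (fun i => if Nat.even i then lo1 (Nat.div2 i) else lo2 (Nat.div2 i)).
  exists (fun i => if Nat.even i then hi1 (Nat.div2 i) else hi2 (Nat.div2 i)).
  split. intros i; destruct (Nat.even i); auto.
  split. intros x [Hx|Hx].
  - destruct (B1 x Hx) as [k Hk]. exists (2*k)%nat. rewrite Nat.even_even, Nat.div2_double. auto.
  - destruct (B2 x Hx) as [k Hk]. exists (2*k+1)%nat. rewrite Nat.even_odd, Nat.div2_odd'. auto.
  - intros n. eapply Rle_trans.
    apply (sum_mono_idx _ n (2*n+1)). intros i; destruct (Nat.even i); [specialize (A1 (Nat.div2 i))|specialize (A2 (Nat.div2 i))]; lra. lia.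
    set (F1 := fun k => hi1 k - lo1 k). set (F2 := fun k => hi2 k - lo2 k).
    rewrite (sum_ext _ (fun i => if Nat.even i then F1 (Nat.div2 i) else F2 (Nat.div2 i))).
    rewrite sum_interleave. specialize (C1 n). specialize (C2 n). unfold F1, F2. lra.
    intros i. unfold F1, F2. destruct (Nat.even i); auto.
Qed.

Lemma RS_abs_WN g a b l N u : pt g a b l -> (forall x, a <= x <= b -> ~ N x -> u x = 0) ->
  Rabs (RS u l) <= RS (WN N u) l.
Proof.
  intros Hl Hu. induction Hl as [|m x t l Hl IH Hmx Hmt Htx H1 H2]; simpl.
  rewrite Rabs_R0; lra.
  pose proof (pt_le _ _ _ _ Hl).
  assert (IH' : Rabs (RS u l) <= RS (WN N u) l) by (apply IH; intros; apply Hu; auto; lra).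
  eapply Rle_trans. apply Rabs_triang. rewrite Rabs_mult, (Rabs_right (x - m)) by lra.
  assert (Rabs (u t) * (x - m) <= WN N u t * (x - m)); [|lra].
  apply Rmult_le_compat_r. lra. unfold WN. destruct (excluded_middle_informative (N t)). lra.
  rewrite Hu; auto. rewrite Rabs_R0; lra. lra.
Qed.

Lemma Int_modify f h a b I N : Int f a b I -> null_set N ->
  (forall x, a <= x <= b -> ~ N x -> f x = h x) -> Int h a b I.
Proof.
  intros [Hab H] HN Hfh. split; auto. intros eps Heps.
  destruct (H (eps/2)) as [g1 [Hg1 K1]]; [lra|].
  destruct (null_gauge N (fun x => h x - f x) (eps/2) HN) as [g2 [Hg2 K2]]; [lra|].
  exists (gmin g1 g2). split. apply gmin_pos; auto. intros l Hl.
  pose proof (K1 l (pt_mono _ _ _ _ _ (gmin_l g1 g2) Hl)).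
  pose proof (K2 a b l (pt_mono _ _ _ _ _ (gmin_r g1 g2) Hl)).
  pose proof (RS_abs_WN _ _ _ _ N (fun x => h x - f x) Hl ltac:(intros x Hx HNx; cbv beta; rewrite Hfh; auto; ring)).
  rewrite RS_minus in H2.
  replace (RS h l - I) with ((RS h l - RS f l) + (RS f l - I)) by ring.
  eapply Rle_lt_trans. apply Rabs_triang. lra.
Qed.

Lemma Int_lower f a b I s mu N : Int f a b I -> s <= b -> 0 <= mu -> null_set N ->
  (forall u, a <= u <= b -> ~ N u -> (u < s -> 0 <= f u) /\ (s <= u -> - mu <= f u)) ->
  - mu * (b - s) <= I.
Proof.
  intros [Hab H] Hsb Hmu HN Hf. apply Rnot_lt_le. intro Hlt.
  set (e := - mu * (b - s) - I).
  assert (He : 0 < e) by (unfold e; lra).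
  set (rho := e / (3 * (mu + 1))).
  assert (Hrho : 0 < rho) by (unfold rho; apply Rdiv_lt_0_compat; lra).
  assert (Hmr : mu * rho < e / 3).
  { assert (rho * (3 * (mu + 1)) = e) by (unfold rho; field; lra). nra. }
  destruct (H (e/3)) as [g1 [Hg1 K1]]; [lra|].
  destruct (null_gauge N f (e/3) HN) as [g2 [Hg2 K2]]; [lra|].
  set (G := gmin (gmin g1 g2) (fun _ => rho)).
  assert (HG : forall x, 0 < G x) by (apply gmin_pos; [apply gmin_pos|]; auto).
  assert (HG1 : forall x, G x <= g1 x) by (intros; unfold G; eapply Rle_trans; [apply gmin_l|apply gmin_l]).
  assert (HG2 : forall x, G x <= g2 x) by (intros; unfold G; eapply Rle_trans; [apply gmin_l|apply gmin_r]).
  assert (HG3 : forall x, G x <= rho) by (intros; unfold G; apply gmin_r).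
  destruct (cousin G a b HG Hab) as [l Hl].
  set (F := fun y => Rmax y (s - rho)).
  assert (HF : forall y z, y <= z -> F y <= F z).
  { intros y z Hyz. unfold F. apply Rmax_lub. apply Rle_trans with z; auto; apply Rmax_l. apply Rmax_r. }
  assert (Claim : forall x l, pt G a x l -> x <= b -> - mu * (F x - F a) - RS (WN N f) l <= RS f l).
  { clear Hl. intros x0 l0 Hl0. induction Hl0 as [|m x t l1 Hl1 IH Hmx Hmt Htx H1 H2]; intros Hxb; simpl.
    lra. pose proof (pt_le _ _ _ _ Hl1).
    specialize (IH ltac:(lra)).
    assert (- mu * (F x - F m) - WN N f t * (x - m) <= f t * (x - m)); [|lra].
    pose proof (HF m x ltac:(lra)).
    unfold WN. destruct (excluded_middle_informative (N t)) as [Ht|Ht].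
    - assert (- Rabs (f t) * (x - m) <= f t * (x - m)).
      { apply Rmult_le_compat_r. lra. pose proof (Rabs_pos (f t)). pose proof (Rle_abs (- f t)). rewrite Rabs_Ropp in *. lra. }
      nra.
    - destruct (Hf t ltac:(lra) Ht) as [Hf1 Hf2].
      destruct (Rlt_le_dec t s) as [Hts|Hst].
      + assert (0 <= f t * (x - m)) by (apply Rmult_le_pos; [apply Hf1; auto|lra]). nra.
      + assert (F x = x /\ F m = m) as [-> ->].
        { unfold F. pose proof (HG3 t). split; apply Rmax_left; lra. }
        specialize (Hf2 Hst). nra. }
  pose proof (Claim b l Hl (Rle_refl b)).
  pose proof (K1 l (pt_mono _ _ _ _ _ HG1 Hl)).
  pose proof (K2 a b l (pt_mono _ _ _ _ _ HG2 Hl)).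
  assert (F b = b) by (unfold F; apply Rmax_left; lra).
  assert (s - rho <= F a) by (unfold F; apply Rmax_r).
  apply Rabs_def2 in H1. unfold e in *. nra.
Qed.

Lemma RS_abs_le g a b l u v : pt g a b l -> (forall x, a <= x <= b -> Rabs (u x) <= v x) ->
  Rabs (RS u l) <= RS v l.
Proof.
  intros Hl Huv. induction Hl as [|m x t l Hl IH Hmx Hmt Htx H1 H2]; simpl.
  rewrite Rabs_R0; lra.
  pose proof (pt_le _ _ _ _ Hl).
  assert (IH' : Rabs (RS u l) <= RS v l) by (apply IH; intros; apply Huv; lra).
  eapply Rle_trans. apply Rabs_triang. rewrite Rabs_mult, (Rabs_right (x - m)) by lra.
  assert (Rabs (u t) * (x - m) <= v t * (x - m)); [|lra].
  apply Rmult_le_compat_r. lra. apply Huv; lra.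
Qed.

Lemma approx_int H f a b J : Int f a b J -> (forall x, a <= x <= b -> 0 <= f x) ->
  (forall e, 0 < e -> exists h K, Int h a b K /\ forall x, a <= x <= b -> Rabs (H x - h x) <= e * f x) ->
  exists I, Int H a b I.
Proof.
  intros HJ Hf Happ. pose proof (Int_le_ab _ _ _ _ HJ) as Hab.
  apply cauchy_int; auto. intros eps Heps.
  set (e := eps / (4 * (Rabs J + 1))).
  assert (He : 0 < e) by (unfold e; apply Rdiv_lt_0_compat; [lra|pose proof (Rabs_pos J); lra]).
  assert (HeJ : 2 * e * (Rabs J + 1) = eps / 2) by (unfold e; field; pose proof (Rabs_pos J); lra).
  destruct (Happ e He) as [h [K [HK Hb]]].
  destruct HK as [_ HK]. destruct (HK (eps/4)) as [g1 [Hg1 K1]]; [lra|].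
  destruct HJ as [_ HJ']. destruct (HJ' 1) as [g2 [Hg2 K2]]; [lra|].
  exists (gmin g1 g2). split. apply gmin_pos; auto.
  assert (Hone : forall l, pt (gmin g1 g2) a b l ->
     Rabs (RS H l - RS h l) <= e * (Rabs J + 1) /\ Rabs (RS h l - K) < eps / 4).
  { intros l Hl. split.
    - rewrite <- RS_minus. eapply Rle_trans. apply (RS_abs_le _ _ _ _ _ (fun x => e * f x) Hl); auto.
      rewrite RS_scal. apply Rmult_le_compat_l. lra.
      pose proof (K2 l (pt_mono _ _ _ _ _ (gmin_r g1 g2) Hl)). apply Rabs_def2 in H0.
      pose proof (Rle_abs J). lra.
    - apply K1. apply (pt_mono _ _ _ _ _ (gmin_l g1 g2) Hl). }
  intros l1 l2 H1 H2. destruct (Hone l1 H1) as [A1 B1]. destruct (Hone l2 H2) as [A2 B2].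
  apply Rabs_def2 in B1. apply Rabs_def2 in B2.
  apply Rabs_def1.
  - pose proof (Rle_abs (RS H l1 - RS h l1)). pose proof (Rle_abs (- (RS H l2 - RS h l2))).
    rewrite Rabs_Ropp in *. lra.
  - pose proof (Rle_abs (- (RS H l1 - RS h l1))). pose proof (Rle_abs (RS H l2 - RS h l2)).
    rewrite Rabs_Ropp in *. lra.
Qed.

Definition Apx (f phi : R -> R) e u v := exists h K, Int h u v K /\
  forall x, u <= x <= v -> Rabs (f x * phi x - h x) <= e * f x.

Lemma Apx_glue f phi e u c v : u <= c -> c <= v -> Apx f phi e u c -> Apx f phi e c v -> Apx f phi e u v.
Proof.
  intros Huc Hcv [h1 [K1 [I1 B1]]] [h2 [K2 [I2 B2]]].
  exists (fun x => if Rlt_dec x c then h1 x else h2 x), (K1 + K2). split.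
  - apply Int_add with c.
    + apply (Int_modify h1 _ _ _ _ (fun x => x = c) I1 (null_point c)).
      intros x Hx Hnx. destruct (Rlt_dec x c); auto. exfalso; apply Hnx; lra.
    + apply (Int_ext h2 _ _ _ _ I2). intros x Hx. destruct (Rlt_dec x c); auto. lra.
  - intros x Hx. destruct (Rlt_dec x c). apply B1; lra. apply B2; lra.
Qed.

Lemma Apx_short f phi e a b J u v : Int f a b J -> (forall x, a <= x <= b -> 0 <= f x) ->
  a <= u -> u <= v -> v <= b -> (forall x, u <= x <= v -> Rabs (phi x - phi u) <= e) ->
  Apx f phi e u v.
Proof.
  intros HJ Hf Hau Huv Hvb Hphi.
  destruct (Int_sub _ _ _ _ _ _ HJ Hau Huv Hvb) as [J' HJ'].
  exists (fun x => phi u * f x), (phi u * J'). split. apply Int_scal; auto.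
  intros x Hx. replace (f x * phi x - phi u * f x) with (f x * (phi x - phi u)) by ring.
  rewrite Rabs_mult, (Rabs_right (f x)) by (apply Rle_ge, Hf; lra).
  rewrite (Rmult_comm e). apply Rmult_le_compat_l. apply Hf; lra. auto.
Qed.

Lemma Int_mult_cont f phi a b J : Int f a b J -> (forall x, a <= x <= b -> 0 <= f x) ->
  (forall x, continuity_pt phi x) -> exists K, Int (fun x => f x * phi x) a b K.
Proof.
  intros HJ Hf Hphi. pose proof (Int_le_ab _ _ _ _ HJ) as Hab.
  apply (approx_int _ f a b J HJ Hf). intros e He.
  assert (Hu : uniform_continuity phi (fun c => a <= c <= b)).
  { apply Heine. apply compact_P3. intros; apply Hphi. }
  destruct (Hu (mkposreal e He)) as [[d Hd] Hdel]. simpl in Hdel.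
  assert (Hind : forall n x, a <= x <= b -> x <= a + INR n * (d/2) -> Apx f phi e a x).
  { induction n; intros x Hx Hxn.
    - simpl in Hxn. apply (Apx_short f phi e a b J a x HJ Hf); try lra.
      intros y Hy. replace y with a by lra. rewrite Rminus_diag, Rabs_R0. lra.
    - destruct (Rle_dec x (a + INR n * (d/2))) as [Hle|Hgt]. apply IHn; auto.
      set (c := a + INR n * (d/2)). assert (a <= c) by (unfold c; pose proof (pos_INR n); nra).
      rewrite S_INR in Hxn. assert (c <= x) by (unfold c; lra).
      assert (x - c <= d/2) by (unfold c; lra).
      apply Apx_glue with c; try lra. apply IHn; [lra| unfold c; lra].
      apply (Apx_short f phi e a b J c x HJ Hf); try lra.
      intros y Hy. apply Rlt_le. apply Hdel; try lra. rewrite Rabs_right; lra. }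
  destruct (INR_archimed (d/2) (b - a)) as [n Hn]. lra.
  destruct (Hind n b ltac:(lra) ltac:(lra)) as [h [K [HK HB]]].
  exists h, K. split; auto.
Qed.

Lemma exp_le1 x : x <= 0 -> exp x <= 1.
Proof. intros H. rewrite <- exp_0. destruct (Req_dec x 0) as [->|]. lra. left; apply exp_increasing; lra. Qed.

Section Main.
Variables (epsh eta tau : R) (c0 : R -> R).
Hypotheses (heps : 0 < epsh) (heta : 0 < eta) (htau : 0 < tau) (hc0 : L1_past tau c0).

Lemma G_int x : L1loc_pos x -> forall T, 0 <= T -> exists I, Int (Defs.concat c0 x) (- tau) T I.
Proof.
  intros [Hx1 Hx2] T HT. destruct hc0 as [_ [I0 HI0]]. apply Int_HK in HI0.
  destruct (Hx2 T HT) as [I1 HI1]. apply Int_HK in HI1.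
  exists (I0 + I1). apply Int_add with 0.
  - apply (Int_modify c0 _ _ _ _ (fun u => u = 0) HI0 (null_point 0)).
    intros u Hu Hnu. unfold Defs.concat. destruct (Rlt_dec u 0); auto. exfalso; apply Hnu; lra.
  - apply (Int_ext x _ _ _ _ HI1). intros u Hu. unfold Defs.concat. destruct (Rlt_dec u 0); auto. lra.
Qed.

Lemma G_nn x : L1loc_pos x -> forall u, - tau <= u -> 0 <= Defs.concat c0 x u.
Proof.
  intros [Hx1 _] u Hu. unfold Defs.concat. destruct (Rlt_dec u 0).
  destruct hc0 as [H _]. apply H; lra. apply Hx1; lra.
Qed.

Definition Fh x t u := Defs.concat c0 x u * exp (eta * (u - t)).

Lemma F_int x : L1loc_pos x -> forall t, 0 <= t -> exists I, Int (Fh x t) (t - tau) t I.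
Proof.
  intros Hx t Ht. destruct (G_int x Hx t Ht) as [I HI].
  destruct (Int_sub _ _ _ (t - tau) t _ HI ltac:(lra) ltac:(lra) ltac:(lra)) as [J HJ].
  destruct (Int_mult_cont _ (fun u => exp (eta * (u - t))) _ _ _ HJ) as [K HK].
  intros u Hu. apply (G_nn x Hx); lra. intros; reg.
  exists K. exact HK.
Qed.

Lemma habit_eq x t I : Int (Fh x t) (t - tau) t I -> habit epsh eta tau c0 x t = epsh * I.
Proof. intros H. unfold habit. f_equal. apply HKint_eq. exact H. Qed.

Lemma habit_bound x : L1loc_pos x -> forall T, 0 <= T -> exists B,
  forall t, 0 <= t <= T -> 0 <= habit epsh eta tau c0 x t <= B.
Proof.
  intros Hx T HT. destruct (G_int x Hx T HT) as [IT HIT].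
  exists (epsh * IT). intros t Ht.
  destruct (F_int x Hx t ltac:(lra)) as [I HI]. rewrite (habit_eq x t I HI).
  destruct (Int_sub _ _ _ (t - tau) t _ HIT ltac:(lra) ltac:(lra) ltac:(lra)) as [J HJ].
  assert (0 <= I).
  { apply (Int_nonneg _ _ _ _ HI). intros u Hu. unfold Fh.
    apply Rmult_le_pos. apply (G_nn x Hx); lra. left; apply exp_pos. }
  assert (I <= J).
  { apply (Int_le _ _ _ _ _ _ HI HJ). intros u Hu. unfold Fh.
    pose proof (G_nn x Hx u ltac:(lra)). pose proof (exp_le1 (eta * (u - t)) ltac:(nra)).
    pose proof (exp_pos (eta * (u - t))). nra. }
  assert (J <= IT).
  { apply (Int_sub_le _ _ _ _ _ _ _ HIT HJ); try lra. intros u Hu. apply (G_nn x Hx); lra. }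
  split. nra. apply Rmult_le_compat_l; lra.
Qed.
End Main.

Section Cmp.
Variables (epsh eta tau : R) (c0 c cm : R -> R).
Hypotheses (heps : 0 < epsh) (heta : 0 < eta) (htau : 0 < tau) (hc0 : L1_past tau c0)
  (hc : L1loc_pos c) (hcm : L1loc_pos cm)
  (hcm_eq : ae_pos (fun t => cm t = habit epsh eta tau c0 cm t))
  (hc_h : ae_pos (fun t => c t >= habit epsh eta tau c0 c t)).

Let Hc := habit epsh eta tau c0 c.
Let Hm := habit epsh eta tau c0 cm.
Let D t := Hc t - Hm t.
Let Nb := fun t => (0 <= t /\ ~ (c t >= Hc t)) \/ (0 <= t /\ ~ (cm t = Hm t)).

Lemma Nb_null : null_set Nb.
Proof. apply null_union; auto. Qed.

Lemma Nb_prop u : 0 <= u -> ~ Nb u -> c u - cm u >= D u.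
Proof.
  intros Hu Hn. unfold D.
  assert (c u >= Hc u) by (apply NNPP; intro; apply Hn; left; auto).
  assert (cm u = Hm u) by (apply NNPP; intro; apply Hn; right; auto). lra.
Qed.

Lemma D_int t : 0 <= t -> exists I, Int (fun u => (Defs.concat c0 c u - Defs.concat c0 cm u) * exp (eta * (u - t))) (t - tau) t I
  /\ D t = epsh * I.
Proof.
  intros Ht. destruct (F_int eta tau c0 htau hc0 c hc t Ht) as [I1 H1].
  destruct (F_int eta tau c0 htau hc0 cm hcm t Ht) as [I2 H2].
  exists (I1 - I2). split.
  - apply (Int_ext _ _ _ _ _ (Int_minus _ _ _ _ _ _ H1 H2)). intros; unfold Fh; ring.
  - unfold D, Hc, Hm. rewrite (habit_eq epsh eta tau c0 c t I1 H1), (habit_eq epsh eta tau c0 cm t I2 H2). ring.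
Qed.

Lemma D_lower T : 0 <= T -> exists B, forall t, 0 <= t <= T -> - B <= D t.
Proof.
  intros HT. destruct (habit_bound epsh eta tau c0 heps heta htau hc0 cm hcm T HT) as [B HB].
  destruct (habit_bound epsh eta tau c0 heps heta htau hc0 c hc T HT) as [B' HB'].
  exists B. intros t Ht. specialize (HB t Ht). specialize (HB' t Ht). unfold D, Hc, Hm. lra.
Qed.

Lemma D_nonneg : forall t, 0 <= t -> 0 <= D t.
Proof.
  set (del := / (2 * epsh)).
  assert (Hdel : 0 < del) by (unfold del; apply Rinv_0_lt_compat; lra).
  assert (Hed : epsh * del = 1/2) by (unfold del; field; lra).
  assert (P : forall n t, 0 <= t < INR n * del -> 0 <= D t).
  { induction n as [|n IH]; intros t Ht. simpl in Ht; lra.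
    set (s := INR n * del).
    assert (Hs : 0 <= s) by (unfold s; pose proof (pos_INR n); nra).
    destruct (Rlt_le_dec t s) as [Hts|Hst]. apply IH; unfold s in Hts; lra.
    destruct (D_lower (s + del) ltac:(lra)) as [B HB].
    set (E := fun y => exists u, s <= u <= s + del /\ y = Rmax 0 (- D u)).
    assert (HEb : bound E).
    { exists (Rmax 0 B). intros y [u [Hu ->]]. specialize (HB u ltac:(lra)).
      apply Rmax_lub. apply Rmax_l. eapply Rle_trans; [|apply Rmax_r]. lra. }
    assert (HEn : exists y, E y) by (exists (Rmax 0 (- D s)); exists s; split; [lra|auto]).
    destruct (completeness E HEb HEn) as [mu [Hub Hlub]].
    assert (Hmu0 : 0 <= mu).
    { eapply Rle_trans; [|apply Hub; exists s; split; [lra|reflexivity]]. apply Rmax_l. }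
    assert (Key : forall u, s <= u <= s + del -> - (epsh * mu * (u - s)) <= D u).
    { intros u Hu. destruct (D_int u ltac:(lra)) as [I [HI ->]].
      assert (- mu * (u - s) <= I).
      { apply (Int_lower _ _ _ _ s mu Nb HI); try lra. apply Nb_null.
        intros v Hv HNv. destruct (Rlt_le_dec v 0) as [Hv0|Hv0].
        - unfold Defs.concat. destruct (Rlt_dec v 0); [|lra]. rewrite Rminus_diag, Rmult_0_l. split; intros; lra.
        - unfold Defs.concat. destruct (Rlt_dec v 0); [lra|].
          pose proof (Nb_prop v Hv0 HNv).
          pose proof (exp_pos (eta * (v - u))). pose proof (exp_le1 (eta * (v - u)) ltac:(nra)).
          split.
          + intros Hvs. assert (0 <= D v) by (apply IH; unfold s in Hvs; lra). nra.
          + intros Hsv. assert (Rmax 0 (- D v) <= mu) by (apply Hub; exists v; split; [lra|auto]).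
            assert (- D v <= mu) by (eapply Rle_trans; [apply Rmax_r|eauto]). nra. }
      nra. }
    assert (Hhalf : is_upper_bound E (mu / 2)).
    { intros y [u [Hu ->]]. apply Rmax_lub. lra. specialize (Key u Hu).
      assert (epsh * mu * (u - s) <= epsh * mu * del) by (apply Rmult_le_compat_l; [nra|lra]). nra. }
    pose proof (Hlub _ Hhalf).
    assert (mu = 0) by lra.
    assert (Ht' : t <= s + del) by (rewrite S_INR in Ht; unfold s; lra).
    specialize (Key t (conj Hst Ht')). subst mu. lra. }
  intros t Ht. destruct (INR_archimed del t Hdel) as [n Hn]. apply (P n). lra.
Qed.

Lemma part1 : ae_pos (fun t => c t >= cm t).
Proof.
  apply (null_sub Nb). 2: apply Nb_null.
  intros t [Ht Hn]. apply NNPP. intro HNb. apply Hn.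
  pose proof (Nb_prop t Ht HNb). pose proof (D_nonneg t Ht). unfold D in *. lra.
Qed.
End Cmp.

Lemma part2 A delta k0 c cm : L1loc_pos c -> L1loc_pos cm -> ae_pos (fun t => c t >= cm t) ->
  forall t, 0 <= t -> kpath A delta k0 c t <= kM A delta k0 cm t.
Proof.
  intros [hc1 hc2] [hm1 hm2] hae t Ht.
  set (r := A - delta).
  destruct (hc2 t Ht) as [Ic HIc]. apply Int_HK in HIc.
  destruct (hm2 t Ht) as [Im HIm]. apply Int_HK in HIm.
  destruct (Int_mult_cont c (fun u => exp (r * (t - u))) 0 t Ic HIc) as [I1 H1].
  intros; apply hc1; lra. intros; reg.
  destruct (Int_mult_cont cm (fun u => exp (- r * u)) 0 t Im HIm) as [I2 H2].
  intros; apply hm1; lra. intros; reg.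
  assert (H1' : Int (fun u => exp (r * (t - u)) * c u) 0 t I1).
  { apply (Int_ext _ _ _ _ _ H1). intros; ring. }
  pose proof (Int_scal (exp (r * t)) _ _ _ _ H2) as H2'.
  pose proof (Int_minus _ _ _ _ _ _ H1' H2') as H3.
  assert (Hlow : - 0 * (t - 0) <= I1 - exp (r * t) * I2).
  { apply (Int_lower _ _ _ _ 0 0 (fun t => 0 <= t /\ ~ c t >= cm t) H3); try lra. exact hae.
    intros u Hu HN. split. intros; lra. intros _.
    assert (c u >= cm u) by (apply NNPP; intro; apply HN; split; [lra|auto]).
    replace (exp (r * (t - u)) * c u - exp (r * t) * (cm u * exp (- r * u)))
      with (exp (r * (t - u)) * (c u - cm u)).
    pose proof (exp_pos (r * (t - u))). nra.
    replace (r * (t - u)) with (r * t + - r * u) by ring. rewrite exp_plus. ring. }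
  unfold kpath, kM. fold r.
  rewrite (HKint_eq _ _ _ _ H1'), (HKint_eq _ _ _ _ H2). lra.
Qed.

Theorem mainTheorem1 (A delta epsh eta tau k0 : R) (c0 cm : R -> R)
  (hA : 0 < A) (hdelta : 0 < delta) (heps : 0 < epsh) (heta : 0 < eta)
  (htau : 0 < tau) (hk0 : 0 <= k0) (hc0 : L1_past tau c0)
  (hcm : L1loc_pos cm)
  (hcm_eq : ae_pos (fun t => cm t = habit epsh eta tau c0 cm t)) :
  forall c : R -> R, L1loc_pos c ->
    ae_pos (fun t => c t >= habit epsh eta tau c0 c t) ->
    ae_pos (fun t => c t >= cm t) /\
    (forall t, 0 <= t -> kpath A delta k0 c t <= kM A delta k0 cm t).
Proof.
  intros c hc hch.
  assert (H1 : ae_pos (fun t => c t >= cm t)) by (apply (part1 epsh eta tau c0 c cm); auto).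
  split; auto. apply part2; auto.
Qed.
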